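(* Let $G$ be a graph, $X\subseteq T\subseteq V(G)$, $k'$ an integer with $\sigma(T)\le k'$, and $H=H_T$ the torso of $T$ in $G$. Let $(L^*,R^* )$ be an $(X,T,k')$-witness. Then for every vertex $u\in(L^*\setminus R^* )\cap T$ there are at most $k'^2$ vertices $t\in(R^*\setminus L^* )\cap T$ such that $\{u,t\}\in E(H)$.
   Context: A vertex cut of $G$ is an ordered pair $(L,R)$ with $L\cup R=V(G)$, $L\setminus R,R\setminus L\ne\emptyset$ and no edge between $L\setminus R$ and $R\setminus L$. The adhesion $\sigma(T)$ is the maximum over connected components $C$ of $G\setminus T$ of $|N_G(C)|$. The torso $H_T$ of $T$ in $G$ is the graph with vertex set $T$ and an edge $\{u,v\}$ whenever $\{u,v\}\in E(G)$ or $u,v\in N_G(D)$ for some connected component $D$ of $G\setminus T$. An $(X,T,k')$-witness is a vertex cut $(L,R)$ of $G$ with $|L\cap R|\le k'$, $|L\cap T|>|L\cap R|$, and $X\subseteq R$. *)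

(* Defs.v *)
(* A finite simple graph on V : finType is a symmetric,
   irreflexive relation e : rel V. *)
From mathcomp Require Import all_boot.
Set Implicit Arguments. Unset Strict Implicit. Unset Printing Implicit Defensive.

Section Graph.
Variable V : finType.
Variable e : rel V.

Definition adj_out (S : {set V}) : rel V :=
  fun x y => [&& e x y, x \notin S & y \notin S].

(* the connected component of G \ S containing x (meaningful for x \notin S) *)
Definition comp_of (S : {set V}) (x : V) : {set V} :=
  [set y | connect (adj_out S) x y].

Definition components (S : {set V}) : {set {set V}} :=
  [set comp_of S x | x in ~: S].

Definition nbhd (C : {set V}) : {set V} :=
  [set v | (v \notin C) && [exists c in C, e c v]].

(* adhesion sigma(T): max over components C of G \ T of |N_G(C)| (0 if none) *)
Definition adhesion (T : {set V}) : nat :=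
  \max_(C in components T) #|nbhd C|.

Definition torso_edge (T : {set V}) (u v : V) : bool :=
  [&& u \in T, v \in T, u != v &
      e u v || [exists D in components T, (u \in nbhd D) && (v \in nbhd D)]].

Definition vertex_cut (L R : {set V}) : Prop :=
  [/\ L :|: R = [set: V], L :\: R != set0, R :\: L != set0 &
      forall x y, x \in L :\: R -> y \in R :\: L -> ~~ e x y].

Definition witness (X T : {set V}) (k' : nat) (L R : {set V}) : Prop :=
  [/\ vertex_cut L R, #|L :&: R| <= k', #|L :&: R| < #|L :&: T| & X \subset R].

End Graph.

(* Main.v *)
Require Import Defs.
From mathcomp Require Import all_boot.

Lemma card_bigcup_le {V I : finType} (A : {set I}) (F : I -> {set V}) :
  #|\bigcup_(i in A) F i| <= \sum_(i in A) #|F i|.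
Proof.
elim/big_rec2: _ => [|i x y _ IH]; first by rewrite cards0.
apply: leq_trans (leq_card_setU _ _).1 _; exact: leq_add.
Qed.

Lemma connect_inv {V : finType} (r : rel V) (P : pred V) a b :
  P a -> (forall x y, P x -> r x y -> P y) -> connect r a b -> P b.
Proof.
move=> Pa H /connectP [p pth ->]; elim: p a Pa pth => //= y p IH a Pa /andP[ray pth].
exact: IH (H _ _ Pa ray) pth.
Qed.

Theorem lemma5p14 (V : finType) (e : rel V)
  (e_sym : symmetric e) (e_irr : irreflexive e)
  (X T : {set V}) (XT : X \subset T) (k' : nat)
  (hsig : adhesion e T <= k')
  (Ls Rs : {set V}) (hw : witness e X T k' Ls Rs) :
  forall u, u \in (Ls :\: Rs) :&: T ->
    #|[set t in (Rs :\: Ls) :&: T | torso_edge e T u t]| <= k' ^ 2.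
Proof.
case: hw => [[hLR _ _ hcut] hS _ _] u.
rewrite !inE => /andP[/andP[uR uL] uT].
have adj_sym : symmetric (adj_out e T).
  by move=> x y; rewrite /adj_out e_sym; case: (e y x); case: (x \in T); case: (y \in T).
have csym := sym_connect_sym adj_sym.
have inLR y : (y \in Ls) || (y \in Rs).
  by have := in_setT y; rewrite -hLR inE.
set S := Ls :&: Rs.
pose B := \bigcup_(s in S :\: T) nbhd e (comp_of e T s).
have sub : [set t in (Rs :\: Ls) :&: T | torso_edge e T u t] \subset B.
  apply/subsetP => t; rewrite !inE => /andP[/andP[/andP[tL tR] tT]].
  rewrite /torso_edge uT tT /= => /andP[_ /orP[eut|]].
    by have := hcut u t; rewrite !inE uR uL tL tR eut => /(_ isT isT).
  case/existsP => D /andP[/imsetP[x xT ->] /andP[uN tN]].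
  rewrite inE in xT.
  have compT y : y \in comp_of e T x -> y \notin T.
    rewrite inE => cxy; apply: (@connect_inv _ (adj_out e T) [pred z | z \notin T] x) cxy => //.
    by move=> a b _ /and3P[].
  have exS : [exists s in comp_of e T x, s \in S].
    apply: contraT => /existsPn H.
    have nS y : y \in comp_of e T x -> y \notin S by move=> Hy; have := H y; rewrite Hy.
    move: uN; rewrite inE => /andP[_ /existsP[c1 /andP[c1D ec1u]]].
    move: tN; rewrite inE => /andP[_ /existsP[c2 /andP[c2D ec2t]]].
    have c1L : c1 \in Ls.
      have := inLR c1; case c1L: (c1 \in Ls) => //= c1R.
      by have := hcut u c1; rewrite !inE uR uL c1L c1R e_sym ec1u => /(_ isT isT).
    have : (c2 \in comp_of e T x) && (c2 \in Ls).
      apply: (@connect_inv _ (adj_out e T) [pred z | (z \in comp_of e T x) && (z \in Ls)] c1); first by rewrite /= c1D.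
        move=> a b /= /andP[aD aL] rab.
        have bD : b \in comp_of e T x.
          by move: aD; rewrite !inE => cxa; apply: connect_trans cxa (connect1 rab).
        rewrite bD /=; have := inLR b; case bL: (b \in Ls) => //= bR.
        have aR : a \notin Rs by have := nS a aD; rewrite !inE aL.
        have := hcut a b; rewrite !inE aL aR bL bR => /(_ isT isT).
        by case/and3P: rab => ->.
      move: c1D c2D; rewrite !inE => cx1 cx2.
      by apply: connect_trans _ cx2; rewrite csym.
    case/andP=> _ c2L.
    have c2R : c2 \notin Rs by have := nS c2 c2D; rewrite !inE c2L.
    by have := hcut c2 t; rewrite !inE c2L c2R tL tR ec2t => /(_ isT isT).
  case/existsP: exS => s /andP[sD sS].
  apply/bigcupP; exists s; first by rewrite inE sS compT.
  suff -> : comp_of e T s = comp_of e T x by [].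
  apply/setP => y; rewrite !inE; move: sD; rewrite inE => cxs.
  apply/idP/idP => H; first exact: connect_trans cxs H.
  by apply: connect_trans H; rewrite csym.
apply: leq_trans (subset_leq_card sub) _.
apply: leq_trans (card_bigcup_le (S :\: T) (fun s => nbhd e (comp_of e T s))) _.
apply: (@leq_trans (\sum_(s in S :\: T) k')).
  apply: leq_sum => s; rewrite inE => /andP[sT _].
  apply: leq_trans hsig; apply: leq_bigmax_cond.
  by apply/imsetP; exists s; rewrite // inE.
rewrite sum_nat_const expnS expn1 leq_mul2r.
apply/orP; right; apply: leq_trans hS; apply: subset_leq_card; exact: subsetDl.
Qed.
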